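(* Let $f(t)=-27(t^2-t+1)$ and $g(t)=-27(2t^3-3t^2-3t+2)$. If $E/\mathbb{Q}$ is an elliptic curve such that $\mathbb{Z}/2\mathbb{Z}\times\mathbb{Z}/2\mathbb{Z}$ embeds into $E_{\mathrm{tors}}(\mathbb{Q})$ and $j(E)\ne0,1728$, then $E$ is $\mathbb{Q}$-isomorphic to an element of $\mathcal{G}$. Moreover, for every $E\in\mathcal{G}$ with $j(E)\ne0,1728$, the fibre of the map $\mathcal{G}\to\mathcal{G}/{\cong_{\mathbb{Q}}}$ containing $E$ has size $6$.
   Context: $\mathcal{E}_t:y^2=x^3+f(t)x+g(t)$ for $t\in\mathbb{Q}$, and $\mathcal{E}_t^d$ is its quadratic twist by $d$. $\mathcal{G}=\{\mathcal{E}_t^d:t\in\mathbb{Q},\ d\in\mathbb{Z}\text{ squarefree},\ \mathrm{Disc}(\mathcal{E}_t^d)\ne0\}$ is regarded as a multiset indexed by the pairs $(t,d)$ (distinct pairs give distinct elements), and $\mathcal{G}\to\mathcal{G}/{\cong_{\mathbb{Q}}}$ sends an element to its $\mathbb{Q}$-isomorphism class. *)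

(* Defs.v *)
From HB Require Import structures.
From mathcomp Require Import all_boot all_order all_algebra.
Set Implicit Arguments. Unset Strict Implicit. Unset Printing Implicit Defensive.
Import Order.TTheory GRing.Theory Num.Theory.
Local Open Scope ring_scope.

Definition ff (t : rat) : rat := -27 * (t ^+ 2 - t + 1).
Definition gg (t : rat) : rat := -27 * (2 * t ^+ 3 - 3 * t ^+ 2 - 3 * t + 2).

(* The curve E_{A,B} : y^2 = x^3 + A x + B over Q is encoded by (A, B). *)
Definition disc (A B : rat) : rat := -16 * (4 * A ^+ 3 + 27 * B ^+ 2).
Definition jinv (A B : rat) : rat :=
  1728 * (4 * A ^+ 3) / (4 * A ^+ 3 + 27 * B ^+ 2).

(* Q-isomorphism: an admissible change of variables
   x = u^2 x' + r, y = u^3 y' + s u^2 x' + t  (u <> 0, all in Q)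
   transforms the equation of E_{A,B} into u^6 times that of E_{A',B'}. *)
Definition Qiso (A B A' B' : rat) : Prop :=
  exists u r s t : rat, u != 0 /\
    forall x y : rat,
      (u ^+ 3 * y + s * u ^+ 2 * x + t) ^+ 2
        - ((u ^+ 2 * x + r) ^+ 3 + A * (u ^+ 2 * x + r) + B)
      = u ^+ 6 * (y ^+ 2 - (x ^+ 3 + A' * x + B')).

(* Rational points: None is the point at infinity O. *)
Definition point := option (rat * rat).

Definition on_curve (A B : rat) (P : point) : bool :=
  match P with
  | None => true
  | Some (x, y) => y ^+ 2 == x ^+ 3 + A * x + B
  end.

Definition add_pt (A : rat) (P Q : point) : point :=
  match P, Q with
  | None, _ => Q
  | _, None => P
  | Some (x1, y1), Some (x2, y2) =>
      if (x1 == x2) && (y1 == - y2) then None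
      else
        let l := if x1 == x2 then (3 * x1 ^+ 2 + A) / (2 * y1)
                 else (y2 - y1) / (x2 - x1) in
        let x3 := l ^+ 2 - x1 - x2 in
        Some (x3, l * (x1 - x3) - y1)
  end.

(* Z/2Z x Z/2Z embeds (as a group) into E(Q) (hence into E_tors(Q)). *)
Definition Z2xZ2_embeds (A B : rat) : Prop :=
  exists phi : 'Z_2 * 'Z_2 -> point,
    injective phi /\ (forall a, on_curve A B (phi a)) /\
    (forall a b, phi (a + b) = add_pt A (phi a) (phi b)).

(* squarefree integers (0 is not squarefree) *)
Definition squarefree_int (d : int) : Prop :=
  d != 0 /\ forall n : nat, (n ^ 2 %| `|d|)%N -> n = 1%N.

(* E_t^d : y^2 = x^3 + d^2 f(t) x + d^3 g(t) *)
Definition twA (p : rat * int) : rat := (p.2%:~R) ^+ 2 * ff p.1.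
Definition twB (p : rat * int) : rat := (p.2%:~R) ^+ 3 * gg p.1.

(* index set of the multiset G *)
Definition inG (p : rat * int) : Prop :=
  squarefree_int p.2 /\ disc (twA p) (twB p) != 0.

(* Main.v *)
Require Import Defs.
From HB Require Import structures.
From mathcomp Require Import all_boot all_order all_algebra.
From mathcomp Require Import ring lra zify.
From Stdlib Require Import Classical.
Import Order.TTheory GRing.Theory Num.Theory.
Local Open Scope ring_scope.

Lemma Qiso_of (A B A' B' u : rat) : u != 0 -> A = u^+4 * A' -> B = u^+6 * B' ->
  Qiso A B A' B'.
Proof.
move=> u0 -> ->; exists u, 0, 0, 0; split=> // x y; ring.
Qed.

Lemma Qiso_inv (A B A' B' : rat) : Qiso A B A' B' ->
  exists u, u != 0 /\ A = u^+4 * A' /\ B = u^+6 * B'.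
Proof.
move=> [u [r [s [t [u0 H]]]]].
have h1 := H 0 1; have h2 := H 0 (-1); have h3 := H 1 1; have h4 := H 1 (-1).
have h5 := H 1 0; have h6 := H (-1) 0; have h7 := H 0 0.
have ht : t * u ^+ 3 = 0 by lra.
have t0 : t = 0.
  by move/eqP: ht; rewrite mulf_eq0 expf_eq0 (negbTE u0) andbF orbF => /eqP.
subst t.
have hs : s * u ^+ 5 = 0 by lra.
have s0 : s = 0.
  by move/eqP: hs; rewrite mulf_eq0 expf_eq0 (negbTE u0) andbF orbF => /eqP.
subst s.
have hr : r * u ^+ 4 = 0 by lra.
have r0 : r = 0.
  by move/eqP: hr; rewrite mulf_eq0 expf_eq0 (negbTE u0) andbF orbF => /eqP.
subst r.
exists u; split=> //; split.
  have hA : (A - u^+4 * A') * u^+2 = 0 by lra.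
  by move/eqP: hA; rewrite mulf_eq0 expf_eq0 (negbTE u0) andbF orbF subr_eq0 => /eqP.
lra.
Qed.

Lemma sqf_nat (n : nat) : (0 < n)%N -> exists d a : nat,
  (forall k : nat, (k ^ 2 %| d)%N -> k = 1%N) /\ (0 < a)%N /\ n = (d * a ^ 2)%N.
Proof.
elim/ltn_ind: n => n IH n0.
case: (classic (exists k : nat, (k ^ 2 %| n)%N /\ k != 1%N)) => [[k [kd k1]] | H].
  have k0 : (0 < k)%N.
    by case: k kd k1 => // ; rewrite expnS mul0n dvd0n => /eqP n00; rewrite n00 in n0.
  have k2 : (1 < k ^ 2)%N.
    have k1' : (1 < k)%N by lia.
    by rewrite (ltn_exp2l 0 2 k1').
  have m0 : (0 < n %/ k ^ 2)%N.
    by rewrite divn_gt0; [apply: dvdn_leq | rewrite expn_gt0 k0].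
  have [d [a [sd [a0 e]]]] := IH _ (ltn_Pdiv k2 n0) m0.
  exists d, (a * k)%N; split=> //; split; first by rewrite muln_gt0 a0.
  by rewrite -(divnK kd) e expnMn mulnA.
exists n, 1%N; split; last by rewrite muln1.
move=> k kd; apply: NNPP => k1; apply: H; exists k; split=> //; exact/eqP.
Qed.

Lemma PoszX2 (b : nat) : Posz (b ^ 2)%N = (Posz b) ^+ 2.
Proof. by rewrite -[LHS]natz natrX natz. Qed.



Lemma sqf_int (N : int) : N != 0 -> exists (d : int) (a : nat),
  squarefree_int d /\ (0 < a)%N /\ N = d * (Posz a) ^+ 2.
Proof.
case: N => n N0.
  have n0 : (0 < n)%N by case: n N0.
  have [d [a [sd [a0 e]]]] := sqf_nat n n0.
  exists (Posz d), a; split; last by split=> //; rewrite e PoszM PoszX2.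
  split=> //; apply/eqP => d0; case: d0 e => ->; rewrite mul0n => n00; by rewrite n00 in n0.
have [d [a [sd [a0 e]]]] := sqf_nat _ (ltn0Sn n).
exists (- Posz d), a; split; last first.
  by split=> //; rewrite NegzE e PoszM PoszX2 mulNr.
split; last by move=> k; rewrite abszN /=; exact: sd.
rewrite oppr_eq0; apply/eqP => d0; case: d0 e => ->; by rewrite mul0n.
Qed.

Lemma sqf_exists (c : rat) : c != 0 -> exists (d : int) (m : rat),
  squarefree_int d /\ m != 0 /\ c = d%:~R * m ^+ 2.
Proof.
move=> c0.
have k0 : (denq c)%:~R != 0 :> rat by rewrite intr_eq0 gt_eqF ?denq_gt0.
have n0 : numq c != 0 by rewrite numq_eq0.
have [d [a [sd [a0 e]]]] := sqf_int _ (mulf_neq0 n0 (denq_neq0 c)).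
have a0' : (a%:R : rat) != 0 by rewrite pnatr_eq0 -lt0n.
exists d, (a%:R / (denq c)%:~R); split=> //; split.
  by rewrite mulf_neq0 ?invr_neq0.
rewrite -{1}(divq_num_den c).
have : ((numq c * denq c)%:~R : rat) = (d * Posz a ^+ 2)%:~R by rewrite e.
rewrite !rmorphM /= -!pmulrn => h.
have -> : (numq c)%:~R / (denq c)%:~R = (numq c)%:~R * (denq c)%:~R / ((denq c)%:~R)^+2 :> rat.
  by field.
rewrite h; field; exact: k0.
Qed.

Lemma sqf_uniq (d1 d2 : int) (q : rat) : squarefree_int d1 -> squarefree_int d2 ->
  d1%:~R = d2%:~R * q ^+ 2 :> rat -> d1 = d2.
Proof.
move=> [d10 s1] [d20 s2] e.
have qe : q = (numq q)%:~R / (denq q)%:~R by rewrite divq_num_den.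
have b0 : (denq q)%:~R != 0 :> rat by rewrite intr_eq0.
have ei : d1 * (denq q)^+2 = d2 * (numq q)^+2.
  apply: (@intr_inj rat). rewrite !rmorphM /= e [in q ^+ 2]qe; field; exact: b0.
have en : (`|d1| * `|denq q|^2 = `|d2| * `|numq q|^2)%N.
  by have := congr1 absz ei; rewrite !abszM !mulnn.
have cop := coprime_num_den q.
have hb : `|denq q|%N = 1%N.
  apply: s2.
  have cop' : coprime (`|denq q| ^ 2) (`|numq q| ^ 2).
    by rewrite coprimeXl // coprimeXr // coprime_sym.
  by rewrite -(Gauss_dvdl _ cop') -en dvdn_mull.
have ha : `|numq q|%N = 1%N.
  apply: s1.
  have cop' : coprime (`|numq q| ^ 2) (`|denq q| ^ 2).
    by rewrite coprimeXl // coprimeXr.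
  by rewrite -(Gauss_dvdl _ cop') en dvdn_mull.
have bq : denq q = 1.
  have := denq_gt0 q; lia.
have : numq q = 1 \/ numq q = -1 by lia.
move=> ha'; apply: (@intr_inj rat).
rewrite e qe bq.
by case: ha' => ->; field.
Qed.

Lemma zz (a : 'Z_2 * 'Z_2) : a + a = 0.
Proof. case: a => [[[|[|n]] Hi] [[|[|m]] Hj]] //=; try (congr pair; apply/val_inj => //). Qed.
Definition a1 : 'Z_2 * 'Z_2 := (1, 0).
Definition a2 : 'Z_2 * 'Z_2 := (0, 1).
Definition a3 : 'Z_2 * 'Z_2 := (1, 1).
Lemma dd : (a1 != 0) && (a2 != 0) && (a3 != 0) && (a1 != a2) && (a1 != a3) && (a2 != a3).
Proof. by []. Qed.

Lemma yneg (y : rat) : y = - y -> y = 0.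
Proof. move=> h; lra. Qed.

Lemma two_torsion (A B : rat) : Z2xZ2_embeds A B -> exists e1 e2 e3 : rat,
  [/\ e1 != e2, e1 != e3, e2 != e3 &
   [/\ e1^+3 + A*e1 + B = 0, e2^+3 + A*e2 + B = 0 & e3^+3 + A*e3 + B = 0]].
Proof.
move=> [phi [inj [onc hom]]].
have phi0 : phi 0 = None.
  have := hom 0 0; rewrite addr0.
  case E: (phi 0) => [[x y]|] //=; rewrite eqxx /=.
  case: eqP => // yn [h1 h2].
  by exfalso; apply: yn; rewrite -h1 subrr mulr0 sub0r in h2.
have pts : forall a, a != 0 -> exists x, phi a = Some (x, 0) /\ x^+3 + A*x + B = 0.
  move=> a a0.
  have := hom a a; rewrite zz phi0.
  have := onc a.
  case E: (phi a) => [[x y]|] /=.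
    rewrite eqxx /= => hc; case: eqP => [/yneg y0 _ | _ //].
    exists x; subst y; split=> //.
    move/eqP: hc; rewrite expr0n /= => hc; by rewrite -hc.
  by move=> _ _; move: a0; rewrite -(inj_eq inj) E phi0 eqxx.
move: dd => /andP[/andP[/andP[/andP[/andP[n1 n2] n3] n12] n13] n23].
have [x1 [p1 h1]] := pts _ n1.
have [x2 [p2 h2]] := pts _ n2.
have [x3 [p3 h3]] := pts _ n3.
exists x1, x2, x3; split=> //.
- by apply/eqP => e; move: n12; rewrite -(inj_eq inj) p1 p2 e eqxx.
- by apply/eqP => e; move: n13; rewrite -(inj_eq inj) p1 p3 e eqxx.
- by apply/eqP => e; move: n23; rewrite -(inj_eq inj) p2 p3 e eqxx.
Qed.

Lemma vieta (A B e1 e2 e3 : rat) : e1 != e2 -> e1 != e3 -> e2 != e3 ->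
  e1^+3 + A*e1 + B = 0 -> e2^+3 + A*e2 + B = 0 -> e3^+3 + A*e3 + B = 0 ->
  [/\ e1 = - e2 - e3, A = e1*e2 + e1*e3 + e2*e3 & B = - (e1*e2*e3)].
Proof.
move=> n12 n13 n23 h1 h2 h3.
have q12 : e1^+2 + e1*e2 + e2^+2 + A = 0.
  have E : (e1 - e2) * (e1^+2 + e1*e2 + e2^+2 + A) = (e1^+3 + A*e1 + B) - (e2^+3 + A*e2 + B) by ring.
  move: E; rewrite h1 h2 subrr => /eqP; rewrite mulf_eq0 subr_eq0 (negbTE n12) /= => /eqP //.
have q13 : e1^+2 + e1*e3 + e3^+2 + A = 0.
  have E : (e1 - e3) * (e1^+2 + e1*e3 + e3^+2 + A) = (e1^+3 + A*e1 + B) - (e3^+3 + A*e3 + B) by ring.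
  move: E; rewrite h1 h3 subrr => /eqP; rewrite mulf_eq0 subr_eq0 (negbTE n13) /= => /eqP //.
have s : e1 = - e2 - e3.
  have E : (e2 - e3) * (e1 + e2 + e3) = (e1^+2 + e1*e2 + e2^+2 + A) - (e1^+2 + e1*e3 + e3^+2 + A) by ring.
  move: E; rewrite q12 q13 subrr => /eqP; rewrite mulf_eq0 subr_eq0 (negbTE n23) /= => /eqP h.
  lra.
subst e1.
have hA : A = (- e2 - e3) * e2 + (- e2 - e3) * e3 + e2 * e3 by lra.
split=> //.
rewrite hA in h1; lra.
Qed.

Definition r1 (t : rat) : rat := 3 * (2 * t - 1).
Definition r2 (t : rat) : rat := -3 * (t + 1).
Definition r3 (t : rat) : rat := 3 * (2 - t).

Lemma cubic_fact (c t x : rat) :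
  (x - c * r1 t) * (x - c * r2 t) * (x - c * r3 t) = x^+3 + c^+2 * ff t * x + c^+3 * gg t.
Proof. rewrite /r1 /r2 /r3 /ff /gg; ring. Qed.

Lemma disc_fact (c t : rat) :
  disc (c^+2 * ff t) (c^+3 * gg t) = 16 * c^+6 * (729 * t * (t - 1))^+2.
Proof. rewrite /disc /ff /gg; ring. Qed.

Lemma disc_scale (u A B : rat) : disc (u^+4 * A) (u^+6 * B) = u^+12 * disc A B.
Proof. rewrite /disc; ring. Qed.

Lemma gg_fact t : gg t = -27 * (2 * t - 1) * (t - 2) * (t + 1).
Proof. rewrite /gg; ring. Qed.

Lemma disc_t (c t : rat) : disc (c^+2 * ff t) (c^+3 * gg t) != 0 ->
  [/\ c != 0, t != 0 & t != 1].
Proof.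
rewrite disc_fact => h.
split; apply: contraNneq h => e.
- have -> : 16 * c ^+ 6 * (729 * t * (t - 1)) ^+ 2 = 0 by rewrite e; ring.
  exact: eqxx.
- have -> : 16 * c ^+ 6 * (729 * t * (t - 1)) ^+ 2 = 0 by rewrite e; ring.
  exact: eqxx.
- have -> : 16 * c ^+ 6 * (729 * t * (t - 1)) ^+ 2 = 0 by rewrite e; ring.
  exact: eqxx.
Qed.

Lemma jB (A B : rat) : disc A B != 0 -> jinv A B != 1728 -> B != 0.
Proof.
move=> hd hj; have [A0|A0] := eqVneq A 0; apply: contraNneq hj => B0.
  have : disc A B = 0 by rewrite /disc A0 B0; ring.
  move=> e; exfalso; move: hd; rewrite e eqxx; done.
have -> : jinv A B = 1728.
  rewrite /jinv B0; field; exact: A0.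
exact: eqxx.
Qed.

Lemma part1 (A B : rat) : disc A B != 0 -> Z2xZ2_embeds A B ->
  exists p : rat * int, inG p /\ Qiso A B (twA p) (twB p).
Proof.
move=> hd /two_torsion [e1 [e2 [e3 [n12 n13 n23 [h1 h2 h3]]]]].
have [s hA hB] := @vieta A B e1 e2 e3 n12 n13 n23 h1 h2 h3.
have n32 : e3 - e2 != 0 by rewrite subr_eq0 eq_sym.
set c := (e3 - e2) / 9.
set t := (e1 - e2) / (e3 - e2).
have c0 : c != 0 by rewrite mulf_neq0 // invr_neq0.
have [d [m [sd [m0 ce]]]] := @sqf_exists c c0.
have eA : A = m^+4 * twA (t, d).
  rewrite /twA /= hA s.
  have -> : m^+4 * (d%:~R ^+ 2 * ff t) = c^+2 * ff t by rewrite ce; ring.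
  rewrite /c /t /ff s; field; exact: n32.
have eB : B = m^+6 * twB (t, d).
  rewrite /twB /= hB s.
  have -> : m^+6 * (d%:~R ^+ 3 * gg t) = c^+3 * gg t by rewrite ce; ring.
  rewrite /c /t /gg s; field; exact: n32.
exists (t, d); split; last exact: (@Qiso_of _ _ _ _ m m0 eA eB).
split=> //; apply/eqP => hd0; move: hd; rewrite eA eB disc_scale hd0 mulr0 eqxx.
by [].
Qed.

Lemma root3 (x a b c : rat) : (x - a) * (x - b) * (x - c) = 0 -> x = a \/ x = b \/ x = c.
Proof.
move/eqP; rewrite !mulf_eq0 !subr_eq0.
by case/orP => [/orP[/eqP->|/eqP->]|/eqP->]; auto.
Qed.

Lemma perm3 (R1 R2 R3 S1 S2 S3 : rat) (P : Prop) :
  R1 != R2 -> R1 != R3 -> R2 != R3 ->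
  (forall x, (x - R1) * (x - R2) * (x - R3) = (x - S1) * (x - S2) * (x - S3)) ->
  (R1 = S1 -> R2 = S2 -> R3 = S3 -> P) ->
  (R1 = S1 -> R2 = S3 -> R3 = S2 -> P) ->
  (R1 = S2 -> R2 = S1 -> R3 = S3 -> P) ->
  (R1 = S2 -> R2 = S3 -> R3 = S1 -> P) ->
  (R1 = S3 -> R2 = S1 -> R3 = S2 -> P) ->
  (R1 = S3 -> R2 = S2 -> R3 = S1 -> P) -> P.
Proof.
move=> n12 n13 n23 H c1 c2 c3 c4 c5 c6.
have h1 : (R1 - S1) * (R1 - S2) * (R1 - S3) = 0 by rewrite -H subrr !mul0r.
have h2 : (R2 - S1) * (R2 - S2) * (R2 - S3) = 0 by rewrite -H subrr mulr0 mul0r.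
have h3 : (R3 - S1) * (R3 - S2) * (R3 - S3) = 0 by rewrite -H subrr mulr0.
case: (root3 _ _ _ _ h1) => [e1|[e1|e1]]; case: (root3 _ _ _ _ h2) => [e2|[e2|e2]];
  case: (root3 _ _ _ _ h3) => [e3|[e3|e3]]; auto;
  try (by exfalso; move: n12; rewrite e1 e2 eqxx);
  try (by exfalso; move: n13; rewrite e1 e3 eqxx);
  try (by exfalso; move: n23; rewrite e2 e3 eqxx).
Qed.

Lemma elem_hit (t u w sa sb sc tau mu m : rat) (d D : int) :
  squarefree_int d -> squarefree_int D -> u != 0 -> m != 0 ->
  d%:~R * r1 t = u^+2 * w * sa -> d%:~R * r2 t = u^+2 * w * sb ->
  d%:~R * r3 t = u^+2 * w * sc ->
  tau = (sa - sb) / (sc - sb) -> mu = (sc - sb) / 9 -> w * mu = D%:~R * m^+2 ->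
  (t, d) = (tau, D).
Proof.
move=> sd sD u0 m0 e1 e2 e3 etau emu eD.
have d0 : d%:~R != 0 :> rat by rewrite intr_eq0; case: sd.
have h9 : 9 * d%:~R = u^+2 * w * (sc - sb).
  move: e2 e3; rewrite /r2 /r3 => e2 e3; lra.
have h9t : 9 * d%:~R * t = u^+2 * w * (sa - sb).
  move: e1 e2; rewrite /r1 /r2 => e1 e2; lra.
have nz : u^+2 * w * (sc - sb) != 0 by rewrite -h9 mulf_neq0.
have scb : sc - sb != 0 by move: nz; rewrite mulf_eq0 negb_or => /andP[].
have uw : u^+2 * w != 0 by move: nz; rewrite mulf_eq0 negb_or => /andP[].
have w0 : w != 0 by move: uw; rewrite mulf_eq0 negb_or => /andP[].
congr pair.
  have -> : t = (9 * d%:~R * t) / (9 * d%:~R) by field.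
  rewrite h9t h9 etau; field; by rewrite ?w0 ?u0 ?scb.
apply: (@sqf_uniq d D (u * m) sd sD).
have -> : (d%:~R : rat) = (9 * d%:~R) / 9 by field.
rewrite h9.
have -> : u ^+ 2 * w * (sc - sb) / 9 = u^+2 * (w * mu) by rewrite emu; field.
rewrite eD; ring.
Qed.

Lemma elem_ok (t0 tau mu m : rat) (d0 D : int) : inG (t0, d0) ->
  mu^+2 * ff tau = ff t0 -> mu^+3 * gg tau = gg t0 ->
  squarefree_int D -> m != 0 -> d0%:~R * mu = D%:~R * m^+2 ->
  inG (tau, D) /\ Qiso (twA (tau, D)) (twB (tau, D)) (twA (t0, d0)) (twB (t0, d0)).
Proof.
move=> [sd0 hd0] hf hg sD m0 eD.
have D0 : D%:~R != 0 :> rat by rewrite intr_eq0; case: sD.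
have mu0 : mu != 0.
  apply/eqP => mu0; move: eD; rewrite mu0 mulr0 => /esym/eqP.
  by rewrite mulf_eq0 (negbTE D0) expf_eq0 (negbTE m0) andbF.
have hD : D%:~R = d0%:~R * mu / m^+2 :> rat by rewrite eD; field.
have im0 : m^-1 != 0 by rewrite invr_neq0.
have eA : twA (tau, D) = (m^-1)^+4 * twA (t0, d0).
  rewrite /twA /= hD -hf; field; exact: m0.
have eB : twB (tau, D) = (m^-1)^+6 * twB (t0, d0).
  rewrite /twB /= hD -hg; field; exact: m0.
split; last exact: (@Qiso_of _ _ _ _ _ im0 eA eB).
split => //; rewrite eA eB disc_scale mulf_neq0 // expf_neq0 //.
Qed.

Lemma neq_diff (a b c : rat) : a - b = c -> c != 0 -> a != b.
Proof. by move=> e; apply: contraNneq => h; rewrite -e h subrr. Qed.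

Lemma pair_neq (a b : rat) (x y : int) : a != b -> (a, x) != (b, y).
Proof. by move=> h; apply: contraNneq h => -[-> _]. Qed.

Lemma q_nz (t : rat) : t^+2 - t + 1 != 0.
Proof.
have sq : 0 <= (2 * t - 1)^+2 by apply: sqr_ge0.
have hq' : 0 < t^+2 - t + 1 by lra.
exact: lt0r_neq0 hq'.
Qed.

Ltac sassum := assumption.
Ltac nzt := repeat (apply/andP; split); try sassum; try match goal with |- is_true true => exact isT end.

Ltac nzc := repeat match goal with
 | |- _ => sassum
 | |- is_true (- _ != 0) => rewrite oppr_eq0
 | |- is_true (_^-1 != 0) => rewrite invr_eq0
 | |- is_true (?a * ?b != 0) => apply: (@mulf_neq0 _ a b)
 end.

Lemma uniq6 (t0 : rat) (D1 D2 D3 D4 D5 D6 : int) :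
  t0 != 0 -> t0 - 1 != 0 -> 1 - t0 != 0 -> 2 * t0 - 1 != 0 -> t0 - 2 != 0 ->
  t0 + 1 != 0 -> t0^+2 - t0 + 1 != 0 ->
  uniq [:: (t0, D1); (1 - t0, D2); (t0 / (t0 - 1), D3); (1 / (1 - t0), D4);
          ((t0 - 1) / t0, D5); (1 / t0, D6)].
Proof.
move=> tn0 tn1a tn1b h2t ht2 htp1 hq.
rewrite !cons_uniq !in_cons !in_nil !orbF !negb_or.
repeat (apply/andP; split); try (apply: pair_neq).
all: try match goal with |- is_true true => exact: isT | |- is_true (~~ false) => exact: isT end.
  - apply: (@neq_diff _ _ (2 * t0 - 1)); [field; nzt | nzc].
  - apply: (@neq_diff _ _ (t0 * (t0 - 2) / (t0 - 1))); [field; nzt | nzc].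
  - apply: (@neq_diff _ _ (- (t0^+2 - t0 + 1) / (1 - t0))); [field; nzt | nzc].
  - apply: (@neq_diff _ _ ((t0^+2 - t0 + 1) / t0)); [field; nzt | nzc].
  - apply: (@neq_diff _ _ ((t0 - 1) * (t0 + 1) / t0)); [field; nzt | nzc].
  - apply: (@neq_diff _ _ (- (t0^+2 - t0 + 1) / (t0 - 1))); [field; nzt | nzc].
  - apply: (@neq_diff _ _ (t0 * (t0 - 2) / (1 - t0))); [field; nzt | nzc].
  - apply: (@neq_diff _ _ ((1 - t0) * (t0 + 1) / t0)); [field; nzt | nzc].
  - apply: (@neq_diff _ _ (- (t0^+2 - t0 + 1) / t0)); [field; nzt | nzc].
  - apply: (@neq_diff _ _ ((t0 + 1) / (t0 - 1))); [field; nzt | nzc].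
  - apply: (@neq_diff _ _ ((2 * t0 - 1) / (t0 * (t0 - 1)))); [field; nzt | nzc].
  - apply: (@neq_diff _ _ ((t0^+2 - t0 + 1) / (t0 * (t0 - 1)))); [field; nzt | nzc].
  - apply: (@neq_diff _ _ ((t0^+2 - t0 + 1) / (t0 * (1 - t0)))); [field; nzt | nzc].
  - apply: (@neq_diff _ _ ((2 * t0 - 1) / (t0 * (1 - t0)))); [field; nzt | nzc].
  - apply: (@neq_diff _ _ ((t0 - 2) / t0)); [field; nzt | nzc].
by [].
Qed.

Ltac nzl := repeat (apply/andP; split); try sassum;
  try match goal with |- is_true true => exact isT end;
  try (apply/negP; move/eqP => ?; first [ lra |
     match goal with H : is_true (?a != 0) |- _ => apply: (negP H); apply/eqP; lra end ]).

Lemma br1 (t0 : rat) : t0 != 0 -> t0 - 1 != 0 -> 1 - t0 != 0 ->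
  [/\ t0 = (r1 t0 - r2 t0) / (r3 t0 - r2 t0), 1 = (r3 t0 - r2 t0) / 9,
     (1)^+2 * ff (t0) = ff t0 & (1)^+3 * gg (t0) = gg t0].
Proof.
move=> tn0 tn1a tn1b; rewrite /r1 /r2 /r3 /ff /gg; split; field; nzl.
Qed.

Lemma br2 (t0 : rat) : t0 != 0 -> t0 - 1 != 0 -> 1 - t0 != 0 ->
  [/\ 1 - t0 = (r1 t0 - r3 t0) / (r2 t0 - r3 t0), -1 = (r2 t0 - r3 t0) / 9,
     (-1)^+2 * ff (1 - t0) = ff t0 & (-1)^+3 * gg (1 - t0) = gg t0].
Proof.
move=> tn0 tn1a tn1b; rewrite /r1 /r2 /r3 /ff /gg; split; field; nzl.
Qed.

Lemma br3 (t0 : rat) : t0 != 0 -> t0 - 1 != 0 -> 1 - t0 != 0 ->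
  [/\ t0 / (t0 - 1) = (r2 t0 - r1 t0) / (r3 t0 - r1 t0), 1 - t0 = (r3 t0 - r1 t0) / 9,
     (1 - t0)^+2 * ff (t0 / (t0 - 1)) = ff t0 & (1 - t0)^+3 * gg (t0 / (t0 - 1)) = gg t0].
Proof.
move=> tn0 tn1a tn1b; rewrite /r1 /r2 /r3 /ff /gg; split; field; nzl.
Qed.

Lemma br4 (t0 : rat) : t0 != 0 -> t0 - 1 != 0 -> 1 - t0 != 0 ->
  [/\ 1 / (1 - t0) = (r2 t0 - r3 t0) / (r1 t0 - r3 t0), t0 - 1 = (r1 t0 - r3 t0) / 9,
     (t0 - 1)^+2 * ff (1 / (1 - t0)) = ff t0 & (t0 - 1)^+3 * gg (1 / (1 - t0)) = gg t0].
Proof.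
move=> tn0 tn1a tn1b; rewrite /r1 /r2 /r3 /ff /gg; split; field; nzl.
Qed.

Lemma br5 (t0 : rat) : t0 != 0 -> t0 - 1 != 0 -> 1 - t0 != 0 ->
  [/\ (t0 - 1) / t0 = (r3 t0 - r1 t0) / (r2 t0 - r1 t0), - t0 = (r2 t0 - r1 t0) / 9,
     (- t0)^+2 * ff ((t0 - 1) / t0) = ff t0 & (- t0)^+3 * gg ((t0 - 1) / t0) = gg t0].
Proof.
move=> tn0 tn1a tn1b; rewrite /r1 /r2 /r3 /ff /gg; split; field; nzl.
Qed.

Lemma br6 (t0 : rat) : t0 != 0 -> t0 - 1 != 0 -> 1 - t0 != 0 ->
  [/\ 1 / t0 = (r3 t0 - r2 t0) / (r1 t0 - r2 t0), t0 = (r1 t0 - r2 t0) / 9,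
     (t0)^+2 * ff (1 / t0) = ff t0 & (t0)^+3 * gg (1 / t0) = gg t0].
Proof.
move=> tn0 tn1a tn1b; rewrite /r1 /r2 /r3 /ff /gg; split; field; nzl.
Qed.

Lemma part2 (p0 : rat * int) : inG p0 -> jinv (twA p0) (twB p0) != 1728 ->
  exists s : seq (rat * int), uniq s /\ size s = 6%N /\
    forall p : rat * int,
      (inG p /\ Qiso (twA p) (twB p) (twA p0) (twB p0)) <-> p \in s.
Proof.
case: p0 => t0 d0 hG hj.
have [sd0 hd0] := hG.
have hB := jB _ _ hd0 hj.
have hd0' : disc (d0%:~R ^+ 2 * ff t0) (d0%:~R ^+ 3 * gg t0) != 0 := hd0.
have [d00 tn0 tn1] := disc_t _ _ hd0'.
have hg : gg t0 != 0.
  apply: contraNneq hB => e; have -> : twB (t0, d0) = 0 by rewrite /twB /= e; ring.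
  exact: eqxx.
have h2t : 2 * t0 - 1 != 0.
  apply: contraNneq hg => e; have -> : gg t0 = 0 by rewrite gg_fact e; ring.
  exact: eqxx.
have ht2 : t0 - 2 != 0.
  apply: contraNneq hg => e; have -> : gg t0 = 0 by rewrite gg_fact e; ring.
  exact: eqxx.
have htp1 : t0 + 1 != 0.
  apply: contraNneq hg => e; have -> : gg t0 = 0 by rewrite gg_fact e; ring.
  exact: eqxx.
clear hj hB hd0' hg hd0.
have tn1a : t0 - 1 != 0 by rewrite subr_eq0.
have tn1b : 1 - t0 != 0 by rewrite subr_eq0 eq_sym.
have hq : t0^+2 - t0 + 1 != 0 by exact: q_nz.
have nzm : forall mu, mu != 0 -> d0%:~R * mu != 0 := fun mu h => mulf_neq0 d00 h.
have [D1 [m1 [sD1 [m10 eD1]]]] := @sqf_exists _ (nzm 1 (oner_neq0 _)).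
have [D2 [m2 [sD2 [m20 eD2]]]] := @sqf_exists _ (nzm (-1) ltac:(by rewrite oppr_eq0 oner_neq0)).
have [D3 [m3 [sD3 [m30 eD3]]]] := @sqf_exists _ (nzm (1 - t0) tn1b).
have [D4 [m4 [sD4 [m40 eD4]]]] := @sqf_exists _ (nzm (t0 - 1) tn1a).
have [D5 [m5 [sD5 [m50 eD5]]]] := @sqf_exists _ (nzm (- t0) ltac:(by rewrite oppr_eq0)).
have [D6 [m6 [sD6 [m60 eD6]]]] := @sqf_exists _ (nzm t0 tn0).
have n9 : (9 : rat) != 0 by [].
have [t1e mu1e f1e g1e] := br1 _ tn0 tn1a tn1b.
have [t2e mu2e f2e g2e] := br2 _ tn0 tn1a tn1b.
have [t3e mu3e f3e g3e] := br3 _ tn0 tn1a tn1b.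
have [t4e mu4e f4e g4e] := br4 _ tn0 tn1a tn1b.
have [t5e mu5e f5e g5e] := br5 _ tn0 tn1a tn1b.
have [t6e mu6e f6e g6e] := br6 _ tn0 tn1a tn1b.
exists [:: (t0, D1); (1 - t0, D2); (t0 / (t0 - 1), D3); (1 / (1 - t0), D4);
          ((t0 - 1) / t0, D5); (1 / t0, D6)].
split; first exact: (uniq6 _ _ _ _ _ _ _ tn0 tn1a tn1b h2t ht2 htp1 hq).
split; first by [].
move=> [t d]; split.
  move=> [[sd hd] /Qiso_inv [u [u0 [hA hB]]]].
  have hd' : disc (d%:~R ^+ 2 * ff t) (d%:~R ^+ 3 * gg t) != 0 := hd.
  have [dn0 tn0' tn1'] := disc_t _ _ hd'.
  have hA' : d%:~R ^+ 2 * ff t = u^+4 * (d0%:~R ^+ 2 * ff t0) := hA.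
  have hB' : d%:~R ^+ 3 * gg t = u^+6 * (d0%:~R ^+ 3 * gg t0) := hB.
  clear hd hd' hA hB.
  have tn1a' : t - 1 != 0 by rewrite subr_eq0.
  have n12 : d%:~R * r1 t != d%:~R * r2 t.
    by apply: (@neq_diff _ _ (9 * d%:~R * t)); [rewrite /r1 /r2; ring | nzc].
  have n13 : d%:~R * r1 t != d%:~R * r3 t.
    by apply: (@neq_diff _ _ (9 * d%:~R * (t - 1))); [rewrite /r1 /r3; ring | nzc].
  have n23 : d%:~R * r2 t != d%:~R * r3 t.
    by apply: (@neq_diff _ _ (- (9 * d%:~R))); [rewrite /r2 /r3; ring | nzc].
  have cub : forall x, (x - d%:~R * r1 t) * (x - d%:~R * r2 t) * (x - d%:~R * r3 t) =
     (x - u^+2 * d0%:~R * r1 t0) * (x - u^+2 * d0%:~R * r2 t0) * (x - u^+2 * d0%:~R * r3 t0).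
    by move=> x; rewrite !cubic_fact hA' hB'; ring.
  apply: (@perm3 _ _ _ _ _ _ _ n12 n13 n23 cub) => e1 e2 e3.
  - rewrite (@elem_hit t u (d0%:~R) (r1 t0) (r2 t0) (r3 t0) (t0) (1) m1 d D1 sd sD1 u0 m10 e1 e2 e3 t1e mu1e eD1).
    + exact: mem_head.
  - rewrite (@elem_hit t u (d0%:~R) (r1 t0) (r3 t0) (r2 t0) (1 - t0) (-1) m2 d D2 sd sD2 u0 m20 e1 e2 e3 t2e mu2e eD2).
    + do 1 apply: mem_behead; exact: mem_head.
  - rewrite (@elem_hit t u (d0%:~R) (r2 t0) (r1 t0) (r3 t0) (t0 / (t0 - 1)) (1 - t0) m3 d D3 sd sD3 u0 m30 e1 e2 e3 t3e mu3e eD3).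
    + do 2 apply: mem_behead; exact: mem_head.
  - rewrite (@elem_hit t u (d0%:~R) (r2 t0) (r3 t0) (r1 t0) (1 / (1 - t0)) (t0 - 1) m4 d D4 sd sD4 u0 m40 e1 e2 e3 t4e mu4e eD4).
    + do 3 apply: mem_behead; exact: mem_head.
  - rewrite (@elem_hit t u (d0%:~R) (r3 t0) (r1 t0) (r2 t0) ((t0 - 1) / t0) (- t0) m5 d D5 sd sD5 u0 m50 e1 e2 e3 t5e mu5e eD5).
    + do 4 apply: mem_behead; exact: mem_head.
  - rewrite (@elem_hit t u (d0%:~R) (r3 t0) (r2 t0) (r1 t0) (1 / t0) (t0) m6 d D6 sd sD6 u0 m60 e1 e2 e3 t6e mu6e eD6).
    + do 5 apply: mem_behead; exact: mem_head.
move=> hin; move: hin; rewrite !in_cons.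
  case/predU1P => [[-> ->]|].
    apply: (@elem_ok t0 (t0) (1) m1 d0 D1 hG f1e g1e sD1 m10 eD1).
  case/predU1P => [[-> ->]|].
    apply: (@elem_ok t0 (1 - t0) (-1) m2 d0 D2 hG f2e g2e sD2 m20 eD2).
  case/predU1P => [[-> ->]|].
    apply: (@elem_ok t0 (t0 / (t0 - 1)) (1 - t0) m3 d0 D3 hG f3e g3e sD3 m30 eD3).
  case/predU1P => [[-> ->]|].
    apply: (@elem_ok t0 (1 / (1 - t0)) (t0 - 1) m4 d0 D4 hG f4e g4e sD4 m40 eD4).
  case/predU1P => [[-> ->]|].
    apply: (@elem_ok t0 ((t0 - 1) / t0) (- t0) m5 d0 D5 hG f5e g5e sD5 m50 eD5).
  rewrite in_nil orbF => /eqP [-> ->].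
    apply: (@elem_ok t0 (1 / t0) (t0) m6 d0 D6 hG f6e g6e sD6 m60 eD6).
Qed.

Theorem lemma6p3 :
  (forall A B : rat, disc A B != 0 -> Z2xZ2_embeds A B ->
     jinv A B != 0 -> jinv A B != 1728 ->
     exists p : rat * int, inG p /\ Qiso A B (twA p) (twB p)) /\
  (forall p0 : rat * int, inG p0 ->
     jinv (twA p0) (twB p0) != 0 -> jinv (twA p0) (twB p0) != 1728 ->
     exists s : seq (rat * int), uniq s /\ size s = 6%N /\
       forall p : rat * int,
         (inG p /\ Qiso (twA p) (twB p) (twA p0) (twB p0)) <-> p \in s).
Proof.
split.
  by move=> A B hd he _ _; exact: (part1 _ _ hd he).
by move=> p0 hG _ hj; exact: (part2 _ hG hj).
Qed.
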